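(* Let $(G,w)$ be a weighted undirected graph and let $G^{\#}$ denote its group inverse graph. (a) If $G$ is connected, then $G^{\#}$ is connected. (b) If $G$ is bipartite, then $G^{\#}$ is bipartite.
   Context: A weighted undirected graph $(G,w)$ on vertices $v_1,\dots,v_n$ assigns a nonzero real weight $w(v_iv_j)$ to each edge; its adjacency matrix $A$ is the $n\times n$ real symmetric matrix with $a_{ij}=w(v_iv_j)$ if $v_iv_j$ is an edge and $a_{ij}=0$ otherwise. The group inverse $A^{\#}$ of a square matrix $A$ is the unique matrix $X$ with $AXA=A$, $XAX=X$, $AX=XA$ (it exists for real symmetric $A$). The group inverse graph $G^{\#}$ has the same vertex set as $G$, with $v_iv_j$ an edge iff the $(i,j)$ entry of $A^{\#}$ is nonzero, the weight of that edge being that entry. *)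

(* Defs.v *)
From HB Require Import structures.
From mathcomp Require Import all_boot all_order all_algebra.
From mathcomp Require Import reals.
Set Implicit Arguments. Unset Strict Implicit. Unset Printing Implicit Defensive.
Import Order.TTheory GRing.Theory Num.Theory.
Local Open Scope ring_scope.

(* A weighted undirected graph on vertices 'I_n is represented by its
   (weighted) adjacency matrix A : real symmetric with zero diagonal;
   v_i v_j is an edge iff A i j != 0, with weight A i j. *)
Definition weighted_adj (R : realType) (n : nat) (A : 'M[R]_n) : Prop :=
  A^T = A /\ (forall i, A i i = 0).

Definition is_group_inverse (R : realType) (n : nat) (A X : 'M[R]_n) : Prop :=
  [/\ A *m X *m A = A, X *m A *m X = X & A *m X = X *m A].

(* The graph of a matrix: v_i v_j is an edge iff M i j != 0
   (a nonzero diagonal entry is a loop). *)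
Definition mx_edge (R : realType) (n : nat) (M : 'M[R]_n) : rel 'I_n :=
  fun i j => M i j != 0.

Definition mx_connected (R : realType) (n : nat) (M : 'M[R]_n) : Prop :=
  forall i j : 'I_n, connect (mx_edge M) i j.

Definition mx_bipartite (R : realType) (n : nat) (M : 'M[R]_n) : Prop :=
  exists c : 'I_n -> bool, forall i j : 'I_n, mx_edge M i j -> c i != c j.

(* Main.v *)
Require Import Defs.
From HB Require Import structures.
From mathcomp Require Import all_boot all_order all_algebra.
From mathcomp Require Import reals.
From mathcomp Require Import lra.
Local Open Scope ring_scope.
Import GRing.Theory.

Section GI.
Variables (R : realType) (n : nat).
Implicit Types A X Y : 'M[R]_n.

Lemma gi_uniq A X Y : is_group_inverse A X -> is_group_inverse A Y -> X = Y.
Proof.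
case=> h1 h2 h3 [k1 k2 k3].
have AAX : A *m (A *m X) = A by rewrite h3 mulmxA.
have AXY : A *m X = A *m Y.
  by rewrite -{1}k1 k3 -!mulmxA AAX.
rewrite -h2 -mulmxA AXY mulmxA -h3 AXY k3.
by rewrite k2.
Qed.

Lemma gi_swap A X : is_group_inverse A X -> is_group_inverse X A.
Proof. by case=> h1 h2 h3; split. Qed.

Lemma gi_sym A X : weighted_adj A -> is_group_inverse A X -> X^T = X.
Proof.
move=> [hA _] hX; apply/esym; apply: (@gi_uniq A X X^T hX).
case: hX => h1 h2 h3; split.
- by rewrite -{1 2}hA -!trmx_mul mulmxA h1 hA.
- by rewrite -{1}hA -!trmx_mul mulmxA h2.
- by rewrite -{1 2}hA -!trmx_mul h3.
Qed.
End GI.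

Lemma symm_comm (R : realType) (n : nat) (E P : 'M[R]_n) :
  E^T = E -> P^T = P -> P *m E = E *m P *m E -> E *m P = P *m E.
Proof.
move=> Et Pt PE.
transitivity ((P *m E)^T); first by rewrite trmx_mul Et Pt.
by rewrite PE !trmx_mul Et Pt mulmxA -PE.
Qed.

Section PartA.
Variables (R : realType) (n : nat).

Lemma part_a (A X : 'M[R]_n) : weighted_adj A -> is_group_inverse A X ->
  mx_connected A -> mx_connected X.
Proof.
move=> hw hX hc i j.
case: (boolP (connect (mx_edge X) i j)) => // nij; exfalso.
pose S := [set y | connect (mx_edge X) i y].
have hXs := @gi_sym _ _ A X hw hX.
have cut : forall x y, x \in S -> y \notin S -> X x y = 0.
  move=> x y; rewrite !inE => cx cy; apply/eqP; apply: contraNT cy => nz.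
  by apply: connect_trans cx (connect1 _).
have cut' : forall x y, x \in S -> y \notin S -> X y x = 0.
  by move=> x y hx hy; rewrite -hXs mxE cut.
pose d := \row_k (if k \in S then 1 else 0 : R).
pose e := \row_k (if k \in S then 0 else 1 : R).
pose P := diag_mx d. pose Q := diag_mx e.
have PQ1 : P + Q = 1%:M.
  by apply/matrixP=> x y; rewrite !mxE; case: (x \in S); case: (x == y); rewrite /= ?mulr1n ?mulr0n ?mul1r ?mul0r ?mulr0 ?mulr1 ?addr0 ?add0r.
have PP : P *m P = P.
  by apply/matrixP=> x y; rewrite mul_diag_mx !mxE; case: (x \in S); case: (x == y); rewrite /= ?mulr1n ?mulr0n ?mul1r ?mul0r ?mulr0 ?mulr1 ?addr0 ?add0r.
have QQ : Q *m Q = Q.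
  by apply/matrixP=> x y; rewrite mul_diag_mx !mxE; case: (x \in S); case: (x == y); rewrite /= ?mulr1n ?mulr0n ?mul1r ?mul0r ?mulr0 ?mulr1 ?addr0 ?add0r.
have PX : P *m X = X *m P.
  apply/matrixP=> x y; rewrite mul_diag_mx mul_mx_diag !mxE.
  case: (boolP (x \in S)) => hx; case: (boolP (y \in S)) => hy;
    rewrite ?mul1r ?mul0r ?mulr1 ?mulr0 //.
  - by rewrite cut.
  - by rewrite cut'.
have QX : Q *m X = X *m Q.
  have -> : Q = 1%:M - P by rewrite -PQ1 addrC addKr.
  by rewrite mulmxBl mulmxBr mul1mx mulmx1 PX.
case: hX => h1 h2 h3.
pose E := A *m X.
have XE : X *m E = X by rewrite /E mulmxA h2.
have EX : E *m X = X by rewrite /E h3 h2.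
have AE : A *m E = A by rewrite /E h3 mulmxA h1.
have Et : E^T = E by rewrite /E trmx_mul hXs hw.1 h3.
have Pt : P^T = P by rewrite tr_diag_mx.
have PE : P *m E = E *m P *m E.
  transitivity (X *m P *m A); first by rewrite -PX -mulmxA /E h3.
  by rewrite -{1}EX -(mulmxA E X P) -PX mulmxA -(mulmxA (E *m P) X A) -h3.
have EP : E *m P = P *m E.
  exact: symm_comm Et Pt PE.
have QE : Q *m E = E *m Q.
  have -> : Q = 1%:M - P by rewrite -PQ1 addrC addKr.
  by rewrite mulmxBl mulmxBr mul1mx mulmx1 EP.
pose B := P *m A *m P + Q *m A *m Q.
have BX : B *m X = E.
  rewrite mulmxDl -!mulmxA PX QX !(mulmxA A X) -/E EP -QE (mulmxA P P) (mulmxA Q Q) PP QQ.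
  by rewrite -(mulmxDl P Q E) PQ1 mul1mx.
have BE : B *m E = B.
  rewrite mulmxDl -(mulmxA (P *m A) P E) -(mulmxA (Q *m A) Q E) -EP QE.
  by rewrite (mulmxA (P *m A) E P) (mulmxA (Q *m A) E Q) -(mulmxA P A E) -(mulmxA Q A E) AE.
have AB : A = B.
  by rewrite -{1}BE /E h3 mulmxA BX /E h1.
have cutA : forall x y, (x \in S) != (y \in S) -> A x y = 0.
  move=> x y hxy; rewrite AB /B /P /Q !mul_mx_diag !mul_diag_mx !mxE.
  move: hxy; case: (x \in S); case: (y \in S) => //= _;
    by rewrite ?mul1r ?mul0r ?mulr1 ?mulr0 ?addr0 ?add0r.
have cl : closed (mx_edge A) S.
  move=> x y; rewrite /mx_edge; apply: contraNeq => hxy.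
  by rewrite cutA.
have := closed_connect cl (hc i j).
by rewrite !inE connect0 (negbTE nij).
Qed.
End PartA.

Lemma gi_conj (R : realType) (n : nat) (U V A X : 'M[R]_n) :
  U *m V = 1%:M -> V *m U = 1%:M -> is_group_inverse A X ->
  is_group_inverse (U *m A *m V) (U *m X *m V).
Proof.
move=> UV VU [h1 h2 h3]; split.
- rewrite !mulmxA -(mulmxA (U *m A) V U) VU mulmx1.
  rewrite -(mulmxA (U *m A *m X) V U) VU mulmx1.
  by rewrite -(mulmxA U A X) -(mulmxA U (A *m X) A) h1.
- rewrite !mulmxA -(mulmxA (U *m X) V U) VU mulmx1.
  rewrite -(mulmxA (U *m X *m A) V U) VU mulmx1.
  by rewrite -(mulmxA U X A) -(mulmxA U (X *m A) X) h2.
- rewrite !mulmxA -(mulmxA (U *m A) V U) VU mulmx1.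
  rewrite -(mulmxA (U *m X) V U) VU mulmx1.
  by rewrite -(mulmxA U A X) -(mulmxA U X A) h3.
Qed.

Lemma gi_opp (R : realType) (n : nat) (A X : 'M[R]_n) :
  is_group_inverse A X -> is_group_inverse (- A) (- X).
Proof.
by move=> [h1 h2 h3]; split; rewrite !(mulNmx, mulmxN, opprK) ?h1 ?h2 ?h3.
Qed.

Lemma part_b (R : realType) (n : nat) (A X : 'M[R]_n) :
  weighted_adj A -> is_group_inverse A X -> mx_bipartite A -> mx_bipartite X.
Proof.
move=> hw hX [c hc]; exists c => x y; rewrite /mx_edge.
pose d := \row_k (if c k then 1 else -1 : R).
pose D := diag_mx d.
have DD : D *m D = 1%:M.
  apply/matrixP=> u v; rewrite mul_diag_mx !mxE.
  by case: (c u); case: (u == v); rewrite /= ?mulr1n ?mulr0n ?mulr0 ?mulN1r ?opprK ?mul1r.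
have DAD : D *m A *m D = - A.
  apply/matrixP=> u v; rewrite mul_mx_diag mul_diag_mx !mxE.
  have [->|nz] := eqVneq (A u v) 0; first by rewrite mulr0 mul0r oppr0.
  have := hc u v nz.
  by case: (c u); case: (c v) => //= _; rewrite ?mulN1r ?mulrN1 ?mul1r ?mulr1 ?opprK.
have h1 := @gi_conj R n D D A X DD DD hX.
rewrite DAD in h1.
have h2 := @gi_uniq R n _ _ _ h1 (@gi_opp R n A X hX).
apply: contraNneq => ecxy.
have := congr1 (fun M : 'M[R]_n => M x y) h2.
rewrite /= mul_mx_diag mul_diag_mx !mxE ecxy.
case: (c y); rewrite ?mul1r ?mulr1 ?mulN1r ?mulrN1 ?opprK => h; apply/eqP; lra.
Qed.

Theorem proposition2p1 (R : realType) (n : nat) (A Ag : 'M[R]_n) :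
  weighted_adj A -> is_group_inverse A Ag ->
  (mx_connected A -> mx_connected Ag) /\ (mx_bipartite A -> mx_bipartite Ag).
Proof.
move=> hw hX; split; [exact: part_a hw hX | exact: part_b hw hX].
Qed.
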